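(* Let $\Theta\subseteq\mathbb Z^{Nd}$ be finite and symmetric, let $\eta>4Nd$, and assume that for all $\mathbf x,\mathbf y\in\Theta$ with $\mathbf x\ne\pi\mathbf y$ for every $\pi\in S_N$, $$|(\lambda V(\mathbf x)+U(\mathbf x))-(\lambda V(\mathbf y)+U(\mathbf y))|\ge\eta.$$ Then for every normalized eigenfunction $\varphi\in\ell^2(\Theta)$ of $H_\Theta$ there exists $\mathbf x\in\Theta$ such that $$|\varphi(\mathbf y)|\le\Big(\frac{2Nd}{\eta-2Nd}\Big)^{\min_{\pi\in S_N}\|\mathbf y-\pi\mathbf x\|_1}\quad\text{for all }\mathbf y\in\Theta.$$
   Context: Let $d,N\ge1$. Points of $\mathbb Z^{Nd}$: $\mathbf x=(x_1,\dots,x_N)$, $x_j\in\mathbb Z^d$; $S_N$ acts by $\pi\mathbf x=(x_{\pi(1)},\dots,x_{\pi(N)})$; symmetric = invariant under all $\pi\in S_N$. $H=-\Delta^{(N)}+\lambda V+U$ on $\ell^2(\mathbb Z^{Nd})$ with $\lambda>0$, $(\Delta^{(N)}\varphi)(\mathbf x)=\sum_{\|\mathbf y-\mathbf x\|_1=1}\varphi(\mathbf y)$, $V(\mathbf x)=\sum_j\mathcal V(x_j)$ for a (fixed) real function $\mathcal V$ on $\mathbb Z^d$, $U(\mathbf x)=\sum_{i<j}\mathcal U(x_i-x_j)$ with $\mathcal U:\mathbb Z^d\to\mathbb R$ finitely supported; $H_\Theta=1_\Theta H1_\Theta$ on $\ell^2(\Theta)$. *)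

(* Defs.v *)
From HB Require Import structures.
From mathcomp Require Import all_boot all_order all_algebra all_fingroup.
From mathcomp Require Import finmap.
From mathcomp Require Import complex.
Set Implicit Arguments. Unset Strict Implicit. Unset Printing Implicit Defensive.
Import Order.TTheory GRing.Theory Num.Theory.
Local Open Scope ring_scope.
Local Open Scope complex_scope.

(* A point of Z^{Nd}: an N x d integer matrix; row j is the particle x_j in Z^d. *)
Definition point (N d : nat) := 'M[int]_(N, d).

Definition pact (N d : nat) (p : 'S_N) (x : point N d) : point N d :=
  row_perm p x.

Definition l1dist (N d : nat) (x y : point N d) : nat :=
  (\sum_(i < N) \sum_(j < d) `|x i j - y i j|%N)%N.

Definition symdist (N d : nat) (y x : point N d) : nat :=
  \big[minn/l1dist y x]_(p : 'S_N) l1dist y (pact p x).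

Definition symmetric_set (N d : nat) (Th : {fset point N d}) : Prop :=
  forall x, x \in Th -> forall p : 'S_N, pact p x \in Th.

Definition Vpot (R : rcfType) (N d : nat) (Vc : 'rV[int]_d -> R) (x : point N d) : R :=
  \sum_(j < N) Vc (row j x).

Definition Upot (R : rcfType) (N d : nat) (Uc : 'rV[int]_d -> R) (x : point N d) : R :=
  \sum_(i < N) \sum_(j < N | (i < j)%N) Uc (row i x - row j x).

Definition finitely_supported (R : rcfType) (d : nat) (Uc : 'rV[int]_d -> R) : Prop :=
  exists S : seq 'rV[int]_d, forall z, Uc z != 0 -> z \in S.

Definition HTheta (R : rcfType) (N d : nat) (lam : R) (Vc Uc : 'rV[int]_d -> R)
  (Th : {fset point N d}) (phi : point N d -> R[i]) (x : point N d) : R[i] :=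
  - (\sum_(y <- Th | l1dist y x == 1%N) phi y)
  + ((lam * Vpot Vc x + Upot Uc x)%:C * phi x).

(* phi in l^2(Theta) is a normalized eigenfunction of H_Theta
   (only the values of phi on Theta are relevant) *)
Definition normalized_eigenfunction (R : rcfType) (N d : nat) (lam : R)
  (Vc Uc : 'rV[int]_d -> R) (Th : {fset point N d}) (phi : point N d -> R[i]) : Prop :=
  (\sum_(x <- Th) `|phi x| ^+ 2 = 1) /\
  exists E : R[i], forall x, x \in Th -> HTheta lam Vc Uc Th phi x = E * phi x.

(* Main.v *)
Require Import Defs.
From HB Require Import structures.
From mathcomp Require Import all_boot all_order all_algebra all_fingroup.
From mathcomp Require Import finmap.
From mathcomp Require Import complex.
From mathcomp Require Import zify ring lra.
Import Order.TTheory GRing.Theory Num.Theory.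
Local Open Scope ring_scope.
Local Open Scope complex_scope.

Section Comb.
Variables N d : nat.
Implicit Types x y z : point N d.

Lemma l1_sym y z : l1dist y z = l1dist z y.
Proof. by apply: eq_bigr => i _; apply: eq_bigr => j _; rewrite distnC. Qed.

Lemma l1_tri y z w : (l1dist y w <= l1dist y z + l1dist z w)%N.
Proof.
rewrite /l1dist -big_split /=; apply: leq_sum => i _.
rewrite -big_split /=; apply: leq_sum => j _; exact: leqD_dist.
Qed.

Lemma l1_refl y : l1dist y y = 0%N.
Proof. by rewrite /l1dist big1 // => i _; rewrite big1 // => j _; rewrite subrr. Qed.

Lemma pact_inv (p : 'S_N) x : pact p^-1 (pact p x) = x.
Proof. by apply/matrixP => i j; rewrite /pact !mxE permKV. Qed.

Lemma bigmin_le (I : eqType) (r : seq I) (P : pred I) (F : I -> nat) a q :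
  q \in r -> P q -> (\big[minn/a]_(p <- r | P p) F p <= F q)%N.
Proof.
elim: r => // h t IH; rewrite inE big_cons => /orP [/eqP <- -> | /IH H Pq].
  exact: geq_minl.
case: (P h); last exact: H.
by apply: leq_trans (geq_minr _ _) (H Pq).
Qed.

Lemma symdist_le y x (p : 'S_N) : (symdist y x <= l1dist y (pact p x))%N.
Proof. by rewrite /symdist; apply: bigmin_le; rewrite ?mem_index_enum. Qed.

Lemma symdist_ex y x : exists p : 'S_N, symdist y x = l1dist y (pact p x).
Proof.
rewrite /symdist; apply: (big_ind (fun v => exists p : 'S_N, v = l1dist y (pact p x))).
- by exists 1%g; rewrite /pact row_perm1.
- move=> a b [p ->] [p' ->]; case: (leqP (l1dist y (pact p x)) (l1dist y (pact p' x))) => h.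
  + by exists p.
  + by exists p'.
- by move=> p _; exists p.
Qed.

Lemma symdist_nbr y z x k : l1dist z y = 1%N -> (k.+1 <= symdist y x)%N ->
  (k <= symdist z x)%N.
Proof.
move=> h1 hk; have [p hp] := symdist_ex z x.
have := symdist_le y x p; have := l1_tri y z (pact p x).
rewrite (l1_sym y z) h1 -hp; lia.
Qed.

Lemma symdist_pos y x : (1 <= symdist y x)%N -> forall p : 'S_N, x != pact p y.
Proof.
move=> h p; apply/eqP => e; have := symdist_le y x p^-1.
have h2 : l1dist y (pact p^-1 x) = 0%N by rewrite e pact_inv l1_refl.
by rewrite h2; lia.
Qed.

Lemma l1_one z y i j : l1dist z y = 1%N -> z i j != y i j ->
  (forall i' j', (i', j') != (i, j) -> z i' j' = y i' j') /\ `|z i j - y i j|%N = 1%N.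
Proof.
rewrite /l1dist pair_bigA (bigD1 (i, j)) // => h1 hne.
set S := (\sum_(p | p != (i, j)) _)%N in h1.
have hpos : (0 < `|z i j - y i j|%N)%N by rewrite absz_gt0 subr_eq0.
simpl in h1.
have hrest : (S == 0)%N by apply/eqP; lia.
split; last by lia.
move=> i' j' hne'; move: hrest; rewrite sum_nat_eq0 => /forallP /(_ (i', j')).
by rewrite hne' /= absz_eq0 subr_eq0 => /eqP.
Qed.

Hypothesis hN : (0 < N)%N.
Hypothesis hd : (0 < d)%N.

Definition code y z : 'I_N * 'I_d * bool :=
  match [pick ij : 'I_N * 'I_d | z ij.1 ij.2 != y ij.1 ij.2] with
  | Some ij => (ij, (y ij.1 ij.2 < z ij.1 ij.2)%R)
  | None => ((Ordinal hN, Ordinal hd), true)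
  end.

Lemma code_inj y z1 z2 : l1dist z1 y = 1%N -> l1dist z2 y = 1%N ->
  code y z1 = code y z2 -> z1 = z2.
Proof.
move=> h1 h2; rewrite /code.
case: pickP => [[i j] /= hij1|h0]; last first.
  by move: h1; rewrite /l1dist big1 // => i _; rewrite big1 // => j _;
     have := h0 (i, j); rewrite /= => /negbFE/eqP ->; rewrite subrr.
case: pickP => [[i' j'] /= hij2|h0]; last first.
  by move: h2; rewrite /l1dist big1 // => a _; rewrite big1 // => b _;
     have := h0 (a, b); rewrite /= => /negbFE/eqP ->; rewrite subrr.
case=> ei ej eb; subst i' j'.
have [o1 a1] := @l1_one _ _ _ _ h1 hij1; have [o2 a2] := @l1_one _ _ _ _ h2 hij2.
apply/matrixP => a b.
case: (eqVneq (a, b) (i, j)) => [[-> ->]|hne]; last by rewrite o1 // o2.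
move: eb a1 a2; set u := z1 i j; set v := z2 i j; set w := y i j.
move=> eb a1 a2; apply/eqP; move: eb; case: (ltrP w u); case: (ltrP w v) => // h h' _; lia.
Qed.

Lemma nbr_count y (s : seq (point N d)) : uniq s ->
  (forall z, z \in s -> l1dist z y = 1%N) -> (size s <= 2 * N * d)%N.
Proof.
move=> us hs.
have -> : (2 * N * d = #|{: 'I_N * 'I_d * bool}|)%N.
  by rewrite !card_prod !card_ord card_bool; lia.
rewrite -(size_map (code y)) cardE; apply: uniq_leq_size.
  rewrite map_inj_in_uniq // => a b ha hb; exact: (@code_inj _ _ _ (hs a ha) (hs b hb)).
by move=> c _; rewrite mem_enum.
Qed.

End Comb.

Lemma exmax (R : realDomainType) (T : eqType) (f : T -> R) (s : seq T) :
  s != [::] -> exists2 x, x \in s & forall y, y \in s -> f y <= f x.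
Proof.
elim: s => // a [|b s] IH _.
  by exists a; rewrite ?inE // => y; rewrite inE => /eqP ->.
have [x hx hmax] := IH isT.
case: (lerP (f a) (f x)) => h.
  exists x; first by rewrite inE hx orbT.
  by move=> y; rewrite inE => /orP [/eqP -> //|]; apply: hmax.
exists a; first by rewrite inE eqxx.
move=> y; rewrite inE => /orP [/eqP -> //|/hmax hy]; exact: le_trans hy (ltW h).
Qed.

Lemma normR (R : rcfType) (r : R) : `|r%:C| = `|r|%:C.
Proof. by rewrite normc_def /= expr0n /= addr0 sqrtr_sqr. Qed.

Lemma mE (R : rcfType) (c : R[i]) : `|c| = (complex.Re `|c|)%:C.
Proof. by rewrite RRe_real ?normr_real. Qed.

Theorem lemma4p4 (R : rcfType) (N d : nat) (hN : (1 <= N)%N) (hd : (1 <= d)%N)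
  (lam : R) (hlam : 0 < lam) (Vc Uc : 'rV[int]_d -> R)
  (hU : finitely_supported Uc)
  (Th : {fset point N d}) (hsym : symmetric_set Th)
  (eta : R) (heta : (4 * N * d)%:R < eta)
  (hgap : forall x y, x \in Th -> y \in Th ->
     (forall p : 'S_N, x != pact p y) ->
     eta <= `|(lam * Vpot Vc x + Upot Uc x) - (lam * Vpot Vc y + Upot Uc y)|)
  (phi : point N d -> R[i])
  (hphi : normalized_eigenfunction lam Vc Uc Th phi) :
  exists2 x, x \in Th &
    forall y, y \in Th ->
      `|phi y| <= (((2 * N * d)%:R / (eta - (2 * N * d)%:R)) ^+ symdist y x)%:C.
Proof.
case: hphi => hnorm [E hE].
pose W (y : point N d) := lam * Vpot Vc y + Upot Uc y.
pose n y := complex.Re `|phi y|.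
pose m (y : point N d) := complex.Re `|(W y)%:C - E|.
have nE : forall y, `|phi y| = (n y)%:C by move=> y; exact: mE.
have n_ge0 : forall y, 0 <= n y by move=> y; rewrite -ler0c -nE normr_ge0.
have hnorm' : \sum_(y <- Th) n y ^+ 2 = 1.
  apply: complexI; rewrite rmorph_sum rmorph1 /= -hnorm; apply: eq_bigr => y _.
  by rewrite rmorphXn /= nE.
have n_le1 : forall y, y \in Th -> n y <= 1.
  move=> y hy; have : n y ^+ 2 <= 1.
    rewrite -hnorm' (bigD1_seq y) ?fset_uniq //= lerDl sumr_ge0 // => *.
    exact: sqr_ge0.
  have := n_ge0 y; nra.
have key : forall y, y \in Th ->
    m y * n y <= \sum_(z <- Th | l1dist z y == 1%N) n z.
  move=> y hy; have := hE y hy; rewrite /HTheta => e.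
  have e2 : ((W y)%:C - E) * phi y = \sum_(z <- Th | l1dist z y == 1%N) phi z.
    rewrite mulrBl -e /W; ring.
  have := ler_norm_sum Th phi (fun z => l1dist z y == 1%N).
  rewrite -e2 normrM nE (@mE _ ((W y)%:C - E)) -rmorphM /=.
  rewrite (eq_bigr (fun z => (n z)%:C)) // -rmorph_sum /= lecR //.
have nb_bound : forall y c, 0 <= c ->
    (forall z, z \in Th -> l1dist z y = 1%N -> n z <= c) ->
    \sum_(z <- Th | l1dist z y == 1%N) n z <= (2 * N * d)%:R * c.
  move=> y c c0 hc.
  apply: le_trans (_ : \sum_(z <- Th | l1dist z y == 1%N) c <= _).
    rewrite big_seq_cond [X in _ <= X]big_seq_cond; apply: ler_sum.
    by move=> z /andP [hz /eqP h]; exact: hc.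
  rewrite -big_filter.
  have -> : forall s : seq (point N d), \sum_(z <- s) c = c *+ size s.
    by elim => [|a s IH]; rewrite ?big_nil ?big_cons ?IH ?mulr0n ?mulrS.
  rewrite -[X in X <= _]mulr_natl; apply: ler_wpM2r => //; rewrite ler_nat.
  apply: (@nbr_count _ _ hN hd y); first exact: filter_uniq (fset_uniq Th).
  by move=> z; rewrite mem_filter => /andP [/eqP].
have Th0 : (Th : seq _) != [::].
  apply/eqP => h0; move: hnorm'; rewrite h0 big_nil => /eqP.
  by rewrite eq_sym oner_eq0.
have [x hx hmax] := @exmax _ _ n _ Th0.
have nx_pos : 0 < n x.
  rewrite lt_def n_ge0 andbT; apply/negP => /eqP h.
  move: hnorm'; rewrite big1_seq; first by move/eqP; rewrite eq_sym oner_eq0.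
  move=> y /andP [_ hy].
  have -> : n y = 0 by apply/le_anti; rewrite n_ge0 -h hmax.
  by rewrite expr2 mul0r.
pose D : R := (2 * N * d)%:R.
have hD : 0 <= D by rewrite /D ler0n.
have hD2 : 2 * D < eta.
  have -> : 2 * D = (4 * N * d)%:R by rewrite /D -natrM; congr (_%:R); lia.
  exact: heta.
have mx_le : m x <= D.
  have h1 := key x hx.
  have h2 := nb_bound x (n x) (n_ge0 x) (fun z hz _ => hmax z hz).
  by rewrite -(ler_pM2r nx_pos); exact: le_trans h1 h2.
have gap : forall y, y \in Th -> (1 <= symdist y x)%N -> eta - D <= m y.
  move=> y hy hs; have h0 := hgap x y hx hy (@symdist_pos _ _ _ _ hs).
  have h3 : `|W x - W y| <= m x + m y.
    rewrite -lecR -normR (_ : (W x - W y)%:C = ((W x)%:C - E) - ((W y)%:C - E)); last first.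
      by rewrite rmorphB /=; ring.
    rewrite [X in _ <= X]rmorphD /=.
    apply: le_trans (ler_normB _ _) _.
    by rewrite (@mE _ ((W x)%:C - E)) (@mE _ ((W y)%:C - E)).
  have : eta <= m x + m y by exact: le_trans h0 h3.
  lra.
pose q := D / (eta - D).
have eD : 0 < eta - D by lra.
have q0 : 0 <= q by rewrite /q divr_ge0 // ltW.
have hq : q * (eta - D) = D by rewrite /q mulfVK // gt_eqF.
have claim : forall k y, y \in Th -> (k <= symdist y x)%N -> n y <= q ^+ k.
  elim=> [|k IH] y hy hk; first by rewrite expr0; exact: n_le1.
  have hsy : (1 <= symdist y x)%N by apply: leq_trans hk.
  have g := gap y hy hsy.
  have hz : forall z, z \in Th -> l1dist z y = 1%N -> n z <= q ^+ k.
    by move=> z hz h1; apply: IH hz (@symdist_nbr _ _ _ _ _ _ h1 hk).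
  have h2 := nb_bound y (q ^+ k) (exprn_ge0 k q0) hz.
  have h1 := key y hy.
  have h3 : (eta - D) * n y <= m y * n y by apply: ler_wpM2r.
  have Q0 := exprn_ge0 k q0.
  have hq' : q * (eta - D) * q ^+ k = D * q ^+ k by rewrite hq.
  rewrite exprS; move: (q ^+ k) Q0 hq' h2 => Q Q0 hq' h2.
  have h4 : (eta - D) * n y <= (eta - D) * (q * Q).
    rewrite mulrA [(eta - D) * q]mulrC hq'; exact: le_trans h3 (le_trans h1 h2).
  by rewrite -(ler_pM2l eD).
exists x => // y hy.
by rewrite nE lecR; apply: claim => //.
Qed.
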